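(* Let $\mathsf{T}$ be a rooted plane tree with $n\geq 2$ nodes and root $\mathfrak{r}$. Let $C^*\in\mathcal{M}_\mathsf{T}$ be a maximal chain with $|C^*|+f_{C^*}(\mathfrak{r})=\max_{C\in\mathcal{M}_\mathsf{T}}(|C|+f_C(\mathfrak{r}))$, and let $k=f_{C^*}(\mathfrak{r})$. Let $v_0=\mathfrak{r},v_1,\dots,v_{|C^*|-1}$ be the nodes of $C^*$ from top to bottom. For $0\leq i\leq|C^*|-2$, let $B_i=\{u\in\mathsf{T}\setminus C^*:u\leq_\mathsf{T} v_i,\ u\not\leq_\mathsf{T} v_{i+1}\}$. Define a partial order $\sqsubseteq$ on $\mathsf{T}\setminus C^*$ by: for $x\in B_i$, $y\in B_j$, if $i>j$ then $x\sqsubseteq y$; if $i=j$ then $x\sqsubseteq y$ iff $x\geq_\mathsf{T} y$. Let $v_{|C^*|},\dots,v_{|\mathsf{T}|-1}$ be an ordering of $\mathsf{T}\setminus C^*$ such that $a\leq b$ whenever $v_a\sqsubseteq v_b$. Let $\delta^\dagger$ be the ornamentation of $\mathsf{T}$ given by $\delta^\dagger(v_i)=\{v_i,v_{i+1},\dots,v_{|C^*|+k-1-i}\}$ for $0\leq i\leq k$ and $\delta^\dagger(v)=\{v\}$ for $v\notin\{v_0,\dots,v_k\}$. Then for all integers $0\leq i\leq k$ and $p\geq 0$, \[\mathsf{Pop}^p(\delta^\dagger)(v_i)=\{v_i\}\cup\{v_j:i+1\leq j\leq|C^*|+k-1-i-p\}.\]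
   Context: A rooted plane tree $\mathsf{T}$ is a finite tree with a distinguished root $\mathfrak{r}$, regarded as a poset $\leq_\mathsf{T}$ in which $v'\leq_\mathsf{T} v$ iff $v$ lies on the path from $v'$ to $\mathfrak{r}$. $\Delta_\mathsf{T}(v)=\{v':v'\leq_\mathsf{T} v\}$; a leaf is a node covering nothing. $\mathcal{M}_\mathsf{T}$ is the set of maximal chains (leaf-to-root paths). For $C\in\mathcal{M}_\mathsf{T}$ and $v\in C$: $\mathrm{height}_C(v)$ is the number of elements of $C$ strictly below $v$; if $v$ is not a leaf, $\mathrm{ch}_C(v)$ is the element of $C$ covered by $v$; $b_C(v)=|\Delta_\mathsf{T}(v)|-\mathrm{height}_C(v)-1$; $f_C(v)=0$ if $v$ is a leaf, and otherwise with $w=\mathrm{ch}_C(v)$, $f_C(v)=f_C(w)+1$ if $f_C(w)+1\leq b_C(w)$ and $f_C(v)=f_C(w)$ otherwise. An ornament is a nonempty set of nodes inducing a connected subgraph; an ornamentation is a map $\delta$ from nodes to ornaments such that the maximal element of $\delta(v)$ is $v$ and any two sets $\delta(v),\delta(v')$ are nested or disjoint. $\mathcal{O}(\mathsf{T})$ is the set of ornamentations ordered by pointwise inclusion (a lattice with meet given by pointwise intersection), and $\mathsf{Pop}(\delta)=\bigwedge(\{\delta\}\cup\{\delta':\delta'\lessdot\delta\})$; $\mathsf{Pop}^p$ is the $p$-th iterate. *)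

(* Defs.v *)
From mathcomp Require Import all_boot.
Set Implicit Arguments. Unset Strict Implicit. Unset Printing Implicit Defensive.

(* The plane (children ordering) structure plays no role in the statement. *)
Definition rooted_tree (V : finType) (r : V) (par : V -> V) : Prop :=
  par r = r /\ forall x : V, exists k, iter k par x = r.

Section Tree.
Variables (V : finType) (r : V) (par : V -> V).

(* u <=_T v : v lies on the path from u to the root *)
Definition anc (u v : V) : bool := [exists k : 'I_#|V|.+1, iter k par u == v].

Definition covers (v u : V) : bool := (u != r) && (par u == v).

Definition Delta (v : V) : {set V} := [set u | anc u v].

Definition leaf (l : V) : bool := [forall u, ~~ covers l u].

Definition maxchain (C : {set V}) : Prop :=
  exists l, leaf l /\ C = [set u | anc l u].

Definition heightC (C : {set V}) (v : V) : nat :=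
  #|[set u in C | anc u v && (u != v)]|.

Definition bC (C : {set V}) (v : V) : nat := #|Delta v| - heightC C v - 1.

Definition chC (C : {set V}) (v : V) : option V := [pick w in C | covers v w].

(* f_C, by recursion down the chain (fuel bounded by #|V|, more than any height) *)
Fixpoint fC_fuel (C : {set V}) (fuel : nat) (v : V) : nat :=
  match fuel with
  | 0 => 0
  | m.+1 =>
    match chC C v with
    | None => 0
    | Some w => let a := fC_fuel C m w in if a.+1 <= bC C w then a.+1 else a
    end
  end.

Definition fC (C : {set V}) (v : V) : nat := fC_fuel C #|V| v.

Definition tree_edge (S : {set V}) : rel V :=
  fun x y => [&& x \in S, y \in S & covers x y || covers y x].

Definition connectedS (S : {set V}) : bool :=
  [forall x in S, forall y in S, connect (tree_edge S) x y].

Definition ornament (S : {set V}) : bool := (S != set0) && connectedS S.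

Definition ornamentation (d : {ffun V -> {set V}}) : bool :=
  [forall v, [&& ornament (d v), v \in d v & [forall u in d v, anc u v]]] &&
  [forall v, forall w,
     [|| d v \subset d w, d w \subset d v | [disjoint d v & d w]]].

Definition orn_le (d1 d2 : {ffun V -> {set V}}) : bool :=
  [forall v, d1 v \subset d2 v].

Definition orn_lt (d1 d2 : {ffun V -> {set V}}) : bool :=
  orn_le d1 d2 && (d1 != d2).

Definition orn_covby (d' d : {ffun V -> {set V}}) : bool :=
  [&& ornamentation d', ornamentation d, orn_lt d' d &
      ~~ [exists e, [&& ornamentation e, orn_lt d' e & orn_lt e d]]].

(* Pop: meet (= pointwise intersection) of d and all elements it covers *)
Definition Pop (d : {ffun V -> {set V}}) : {ffun V -> {set V}} :=
  [ffun v => d v :&: \bigcap_(d' | orn_covby d' d) d' v].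

End Tree.

Definition Bset (V : finType) (par : V -> V) (Cs : {set V}) (v : nat -> V) (i : nat)
  : {set V} :=
  [set u | [&& u \notin Cs, anc par u (v i) & ~~ anc par u (v i.+1)]].

(* Main.v *)
Require Import Defs.
From mathcomp Require Import all_boot zify.
Set Implicit Arguments. Unset Strict Implicit. Unset Printing Implicit Defensive.

Ltac clean :=
  repeat match goal with
  | H : is_true (_ \in _) |- _ => clear H
  | H : is_true (~~ (_ \in _)) |- _ => clear H
  | H : is_true (anc _ _ _) |- _ => clear H
  | H : is_true (~~ anc _ _ _) |- _ => clear H
  | H : is_true (connect _ _ _) |- _ => clear H
  | H : ?x = ?y |- _ => lazymatch type of x with nat => fail | bool => fail | _ => clear H end
  | H : is_true (@eq_op _ ?x _) |- _ => lazymatch type of x with nat => fail | _ => clear H end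
  | H : is_true (~~ (@eq_op _ ?x _)) |- _ => lazymatch type of x with nat => fail | _ => clear H end
  | H : forall _, _ |- _ => clear H
  end.
Ltac slia := clean; lia.

Section TreeFacts.
Variables (V : finType) (r : V) (par : V -> V).
Hypothesis Htree : rooted_tree r par.

Lemma iter_r j : iter j par r = r.
Proof. case: Htree => Hr _; elim: j => //= j ->; exact: Hr. Qed.

Lemma iter_periodic x a b : iter a par x = iter b par x -> a <= b ->
  forall s, iter (a + s * (b - a)) par x = iter a par x.
Proof.
move=> Hab Hle; elim=> [|s IH]; first by rewrite mul0n addn0.
have -> : a + s.+1 * (b - a) = (b - a) + (a + s * (b - a)) by rewrite mulSn; lia.
by rewrite iterD IH -iterD subnK.
Qed.

Lemma iter_ge x K N : iter K par x = r -> K <= N -> iter N par x = r.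
Proof. move=> HK HKN; by rewrite -(subnK HKN) iterD HK iter_r. Qed.

Lemma periodic_r x a b : a < b -> iter a par x = iter b par x -> iter a par x = r.
Proof.
move=> Hab Heq; case: Htree => _ /(_ x) [K HK].
rewrite -(iter_periodic Heq (ltnW Hab) K); apply: (iter_ge HK).
have : 1 <= b - a by lia.
move=> H1; have : K <= K * (b - a) by rewrite -{1}(muln1 K) leq_mul2l H1 orbT.
lia.
Qed.

Lemma iter_n x : iter #|V| par x = r.
Proof.
pose f := fun j : 'I_#|V|.+1 => iter j par x.
have : ~~ injectiveb f.
  apply/negP => /injectiveP Hi; have := @leq_card _ _ f Hi; rewrite card_ord; lia.
case/injectivePn => a [b Hab Heq].
have Hab' : (a : nat) != b by [].
case: (ltngtP a b) => [lt|gt|eq]; last by move: Hab'; rewrite eq eqxx.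
- apply: (iter_ge (periodic_r lt Heq)); have := ltn_ord a; lia.
- apply: (iter_ge (periodic_r gt (esym Heq))); have := ltn_ord b; lia.
Qed.

Lemma ancP x y : reflect (exists K, iter K par x = y) (anc par x y).
Proof.
apply: (iffP existsP) => [[K /eqP HK]|[K HK]]; first by exists K.
case: (ltnP K #|V|.+1) => HKn.
  by exists (Ordinal HKn); apply/eqP.
have Hn : #|V| < #|V|.+1 by [].
exists (Ordinal Hn); apply/eqP => /=; rewrite -HK.
by rewrite (iter_n x) (@iter_ge x #|V| K) // ?(iter_n x) // ltnW.
Qed.

Lemma anc_refl x : anc par x x.
Proof. by apply/ancP; exists 0. Qed.

Lemma anc_par x : anc par x (par x).
Proof. by apply/ancP; exists 1. Qed.

Lemma anc_trans x y z : anc par x y -> anc par y z -> anc par x z.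
Proof.
move=> /ancP [a Ha] /ancP [b Hb]; apply/ancP; exists (b + a).
by rewrite iterD Ha.
Qed.

Lemma anc_root x : anc par x r.
Proof. case: Htree => _ /(_ x) [K HK]; apply/ancP; by exists K. Qed.

Lemma anc_antisym x y : anc par x y -> anc par y x -> x = y.
Proof.
move=> /ancP [a Ha] /ancP [b Hb].
case: (posnP (a + b)) => Hab.
  have Ha0 : a = 0 by lia. by rewrite -Ha Ha0.
have Heq : iter 0 par x = iter (a + b) par x by rewrite addnC iterD Ha Hb.
have Hx := periodic_r Hab Heq; rewrite /= in Hx.
by rewrite -Ha Hx iter_r.
Qed.

Lemma par_fix x : par x = x -> x = r.
Proof.
move=> Hx; case: Htree => _ /(_ x) [K HK]; rewrite -HK.
by elim: K {HK} => //= K <-; rewrite Hx.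
Qed.

Lemma anc_step x z : anc par x z -> x != z -> anc par (par x) z.
Proof.
move=> /ancP [[|K] HK] Hne; first by rewrite -HK eqxx in Hne.
by apply/ancP; exists K; rewrite -iterSr.
Qed.

Lemma child_exists x w : anc par x w -> x != w ->
  exists c, [/\ par c = w, c != w & anc par x c].
Proof.
move=> /ancP [a Ha]; elim: a x Ha => [|a IH] x Ha Hne; first by rewrite -Ha eqxx in Hne.
rewrite iterSr in Ha.
case: (eqVneq (par x) w) => Hp.
  by exists x; split => //; exact: anc_refl.
have [c [H1 H2 H3]] := IH _ Ha Hp.
by exists c; split => //; apply: anc_trans H3; exact: anc_par.
Qed.

Lemma covers_of c w : par c = w -> c != w -> covers r par w c.
Proof.
move=> Hp Hne; rewrite /covers Hp eqxx andbT; apply/eqP => Hc.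
case: Htree => Hr _; by rewrite Hc Hr in Hp; rewrite Hc -Hp in Hne; rewrite eqxx in Hne.
Qed.

Lemma leaf_Delta l x : leaf r par l -> anc par x l -> x = l.
Proof.
move=> /forallP Hl Ha; apply/eqP; apply/negPn/negP => Hne.
have [c [H1 H2 _]] := child_exists Ha Hne.
by have := Hl c; rewrite (covers_of H1 H2).
Qed.

Lemma tree_edge_sym (S : {set V}) : symmetric (tree_edge r par S).
Proof.
by move=> x y; rewrite /tree_edge; case: (x \in S); case: (y \in S) => //=; rewrite orbC.
Qed.

Lemma connect_Delta (S : {set V}) z x y : z \notin S ->
  connect (tree_edge r par S) x y -> (anc par x z) = (anc par y z).
Proof.
move=> Hz Hc.
have Hcl : closed (tree_edge r par S) (fun u => anc par u z).
  have key : forall a b, tree_edge r par S a b -> covers r par a b -> anc par a z = anc par b z.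
    move=> a b /and3P [Ha Hb _] /andP [_ /eqP Hp].
    apply/idP/idP => H.
    - by rewrite -Hp in H; apply: anc_trans H; exact: anc_par.
    - rewrite -Hp; apply: anc_step => //; apply/eqP => E; by rewrite -E Hb in Hz.
  move=> a b He; have He' := He; move/and3P: He' => [_ _ /orP [H|H]].
  - exact: key.
  - rewrite tree_edge_sym in He; exact/esym/key.
exact: (closed_connect Hcl Hc).
Qed.

End TreeFacts.

Section Main.
Variables (V : finType) (r : V) (par : V -> V).
Hypothesis Htree : rooted_tree r par.
Hypothesis Hn : 2 <= #|V|.
Variable Cs : {set V}.
Hypothesis HCs : maxchain r par Cs.
Variable v : nat -> V.
Hypothesis Hinj : forall a b, a < #|V| -> b < #|V| -> v a = v b -> a = b.
Hypothesis Hv0 : v 0 = r.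
Hypothesis HvC : forall i, i < #|Cs| -> v i \in Cs.
Hypothesis HvP : forall i, i.+1 < #|Cs| -> par (v i.+1) = v i.
Hypothesis Hlin : forall a b i j,
     #|Cs| <= a < #|V| -> #|Cs| <= b < #|V| ->
     i.+1 < #|Cs| -> j.+1 < #|Cs| ->
     v a \in Bset par Cs v i -> v b \in Bset par Cs v j ->
     (j < i) || ((i == j) && anc par (v b) (v a)) ->
     a <= b.

Local Notation n := #|V|.
Local Notation m := #|Cs|.
Local Notation k := (fC r par Cs r).

Lemma vinj a b : a < n -> b < n -> (v a == v b) = (a == b).
Proof. move=> Ha Hb; apply/eqP/eqP => [|->] //; exact: Hinj. Qed.

Lemma m_le_n : m <= n.
Proof. exact: max_card. Qed.

Lemma cover_of (N : nat) (A : {set V}) : N <= n -> #|A| = N -> (forall i, i < N -> v i \in A) ->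
  forall u, u \in A -> exists2 i, i < N & u = v i.
Proof.
move=> HN HA Hv u Hu.
pose B := [set v (nat_of_ord i) | i : 'I_N].
have HBA : B \subset A by apply/subsetP => x /imsetP [i _ ->]; exact: Hv.
have Hinj' : injective (fun i : 'I_N => v i).
  move=> i j /= E; apply: val_inj; apply: Hinj => //; exact: leq_trans (ltn_ord _) HN.
have HB : #|B| = N by rewrite card_imset // card_ord.
have : B == A by rewrite eqEcard HBA HA HB leqnn.
move/eqP => E; rewrite -E in Hu; case/imsetP: Hu => i _ ->; by exists i.
Qed.

Lemma chain_cover u : u \in Cs -> exists2 i, i < m & u = v i.
Proof. exact: (@cover_of m Cs m_le_n erefl HvC). Qed.

Lemma all_cover u : exists2 a, a < n & u = v a.
Proof.
apply: (@cover_of n setT) => //; try by rewrite ?cardsT ?inE.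
Qed.

Lemma in_chain a : a < n -> (v a \in Cs) = (a < m).
Proof.
move=> Ha; apply/idP/idP; last exact: HvC.
move/chain_cover => [i Hi E]; have := Hinj Ha (leq_trans Hi m_le_n) E; by move=> ->.
Qed.

Lemma chain_iter d j : d <= j -> j < m -> iter d par (v j) = v (j - d).
Proof.
elim: d j => [|d IH] j Hd Hj; first by rewrite subn0.
rewrite iterSr.
have Hj1 : (j.-1).+1 = j by slia.
have -> : par (v j) = v j.-1 by rewrite -{1}Hj1 HvP // Hj1.
rewrite IH; [congr v; slia | slia | slia].
Qed.

Lemma chain_anc i j : i <= j -> j < m -> anc par (v j) (v i).
Proof.
move=> Hij Hj; apply/(ancP Htree); exists (j - i); rewrite chain_iter //; last slia.
congr v; slia.
Qed.

Lemma chain_anc_iff i j : i < m -> j < m -> anc par (v j) (v i) = (i <= j).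
Proof.
move=> Hi Hj; apply/idP/idP => [H|H]; last exact: chain_anc.
case: (leqP i j) => // Hji.
have E := anc_antisym Htree H (chain_anc (ltnW Hji) Hi).
have := Hinj (leq_trans Hj m_le_n) (leq_trans Hi m_le_n) E; slia.
Qed.

Lemma m_ge2 : 2 <= m.
Proof.
case: HCs => l [Hl HC].
have Hlr : l != r.
  apply/eqP => Elr; rewrite Elr in Hl.
  have : 0 < #|predC1 r| by rewrite cardC1; slia.
  case/card_gt0P => x; rewrite inE => Hx.
  have [c [H1 H2 _]] := child_exists Htree (anc_root Htree x) Hx.
  by move/forallP: Hl => /(_ c); rewrite (covers_of Htree H1 H2).
have : [set l; r] \subset Cs.
  apply/subsetP => x; rewrite !inE HC => /orP [] /eqP ->; rewrite inE;
    [exact: (anc_refl Htree) | exact: anc_root].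
move/subset_leq_card; by rewrite cards2 Hlr.
Qed.

Lemma last_only x : anc par x (v m.-1) -> x = v m.-1.
Proof.
case: HCs => l [Hl HC] Hx.
have Hm := m_ge2.
have Hl' : l \in Cs by rewrite HC inE (anc_refl Htree).
case: (chain_cover Hl') => j Hj El.
have H1 : anc par l (v m.-1) by move: (HvC (ltac:(slia) : m.-1 < m)); rewrite HC inE.
have H2 : anc par (v m.-1) l by rewrite El; apply: chain_anc; slia.
have E := anc_antisym Htree H1 H2.
by rewrite -E; apply: (leaf_Delta Htree Hl); rewrite E.
Qed.

Lemma off_not_last x : x \notin Cs -> ~~ anc par x (v m.-1).
Proof.
move=> Hx; apply/negP => /last_only E; rewrite E HvC // in Hx.
have := m_ge2; slia.
Qed.


Definition g i := fC_fuel r par Cs (m.-1 - i) (v i).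
Definition beta j := #|Delta par (v j) :\: Cs|.

Lemma v_ne_r i : 0 < i -> i < n -> v i != r.
Proof. move=> Hi Hn'; rewrite -Hv0 vinj //; [slia | slia]. Qed.

Lemma chC_v i : i.+1 < m -> chC r par Cs (v i) = Some (v i.+1).
Proof.
move=> Hi; rewrite /chC; case: pickP => [w /andP [Hw Hc]|H].
- case: (chain_cover Hw) => c Hc' Ew; subst w.
  move: Hc; rewrite /covers => /andP [Hr /eqP Hp].
  have Hc0 : 0 < c by case: (posnP c) => [E|//]; rewrite E Hv0 eqxx in Hr.
  have Hc1 : (c.-1).+1 = c by slia.
  move: Hp; rewrite -Hc1 HvP ?Hc1 // => Hp.
  have Hmn := m_le_n.
  have E : c.-1 = i by apply: (Hinj _ _ Hp); slia.
  by rewrite -E Hc1.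
- have := H (v i.+1); rewrite HvC //= /covers HvP // eqxx andbT v_ne_r //.
  have := m_le_n; slia.
Qed.

Lemma chC_last : chC r par Cs (v m.-1) = None.
Proof.
rewrite /chC; case: pickP => [w /andP [Hw Hc]|//].
case: (chain_cover Hw) => c Hc' Ew; subst w.
move: Hc; rewrite /covers => /andP [Hr /eqP Hp].
have Hc0 : 0 < c by case: (posnP c) => [E|//]; rewrite E Hv0 eqxx in Hr.
have Hc1 : (c.-1).+1 = c by slia.
move: Hp; rewrite -Hc1 HvP ?Hc1 // => Hp.
have Hmn := m_le_n.
have E : c.-1 = m.-1 by apply: (Hinj _ _ Hp); slia.
slia.
Qed.

Lemma fuel_g fuel i : i < m -> m.-1 - i <= fuel -> fC_fuel r par Cs fuel (v i) = g i.
Proof.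
elim: fuel i => [|f IH] i Hi Hf.
  by rewrite /g; have -> : m.-1 - i = 0 by slia.
case: (ltnP i.+1 m) => Hi1.
- rewrite /= chC_v // IH //; last slia.
  rewrite /g; have -> : m.-1 - i = (m.-1 - i.+1).+1 by slia.
  by rewrite /= chC_v.
- have Ei : i = m.-1 by slia.
  rewrite /g Ei /= chC_last; have -> : m.-1 - m.-1 = 0 by slia. by [].
Qed.

Lemma k_g0 : k = g 0.
Proof.
rewrite /fC; have -> : fC_fuel r par Cs #|V| r = fC_fuel r par Cs #|V| (v 0) by rewrite Hv0.
rewrite fuel_g //; [have := m_ge2; slia | have := m_le_n; slia].
Qed.

Lemma g_rec i : i.+1 < m ->
  g i = if (g i.+1).+1 <= bC par Cs (v i.+1) then (g i.+1).+1 else g i.+1.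
Proof.
move=> Hi; rewrite {1}/g; have -> : m.-1 - i = (m.-1 - i.+1).+1 by slia.
by rewrite /= chC_v.
Qed.

Lemma g_last : g m.-1 = 0.
Proof. by rewrite /g subnn. Qed.

Lemma bC_le_beta j : bC par Cs (v j) <= beta j.
Proof.
rewrite /bC /beta.
have H1 := cardsID Cs (Delta par (v j)).
have H2 : #|Delta par (v j) :&: Cs| <= (heightC par Cs (v j)).+1.
  rewrite /heightC.
  apply: leq_trans (_ : #|v j |: [set u in Cs | anc par u (v j) && (u != v j)]| <= _).
    apply: subset_leq_card; apply/subsetP => x; rewrite !inE => /andP [Ha Hc].
    by case: (eqVneq x (v j)) => //= _; rewrite Ha Hc.
  by rewrite cardsU1; case: (_ \notin _).
slia.
Qed.

Lemma beta_mono j : j.+1 < m -> beta j.+1 <= beta j.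
Proof.
move=> Hj; apply: subset_leq_card; apply/subsetP => x; rewrite !inE => /andP [-> Ha] /=.
apply: (anc_trans Htree Ha); apply: chain_anc => //; slia.
Qed.

Lemma beta_last : beta m.-1 = 0.
Proof.
apply/eqP; rewrite cards_eq0; apply/eqP; apply/setP => x; rewrite !inE.
apply/negP => /andP [Hx Ha]; have E := last_only Ha; rewrite E HvC in Hx => //.
have := m_ge2; slia.
Qed.

Lemma g_le_beta d i : i + d = m.-2 -> g i <= beta i.+1.
Proof.
have Hm := m_ge2.
elim: d i => [|d IH] i Hid.
- have Ei : i.+1 = m.-1 by slia.
  rewrite g_rec; last slia.
  rewrite Ei g_last; case: ifP => H; first exact: leq_trans H (bC_le_beta _).
  by [].
- rewrite g_rec; last slia.
  case: ifP => H; first exact: leq_trans H (bC_le_beta _).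
  apply: leq_trans (IH i.+1 _) _; first slia.
  apply: beta_mono; slia.
Qed.

Lemma g_step i : i.+1 < m -> g i <= (g i.+1).+1.
Proof. move=> Hi; rewrite g_rec //; case: ifP => _; slia. Qed.

Lemma g_lower i : i < m -> k <= g i + i.
Proof.
elim: i => [|i IH] Hi; first by rewrite k_g0 addn0.
have := IH (ltnW Hi); have := g_step Hi; slia.
Qed.

Lemma k_le : k <= m.-2.
Proof.
have Hm := m_ge2.
have H0 : g m.-2 = 0.
  rewrite g_rec; last slia.
  have -> : m.-2.+1 = m.-1 by slia.
  rewrite g_last; have := bC_le_beta m.-1; rewrite beta_last.
  by case: ifP => // H1 H2; have := leq_trans H1 H2.
have := g_lower (ltac:(slia) : m.-2 < m); slia.
Qed.

Lemma beta_k i : i < k -> k - i <= beta i.+1.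
Proof.
move=> Hi; have Hk := k_le; have Hm := m_ge2.
have := g_lower (ltac:(slia) : i < m).
have := @g_le_beta (m.-2 - i) i ltac:(slia); slia.
Qed.

Lemma k_le_nm : k <= n - m.
Proof.
case: (posnP k) => Hk; first by rewrite Hk.
have := beta_k Hk; rewrite subn0 => H.
have : beta 1 <= #|~: Cs|.
  apply: subset_leq_card; apply/subsetP => x; rewrite !inE; by case/andP.
have := cardsC Cs; slia.
Qed.


Lemma between (P : nat -> bool) j0 m' : P j0 -> ~~ P m' -> j0 < m' ->
  exists j, [/\ j0 <= j, j < m', P j & ~~ P j.+1].
Proof.
move=> H0; elim: m' => [|m' IH] Hm Hlt //.
case HP: (P m').
- by exists m'; split => //; slia.
- have Hlt' : j0 < m'.
    case: (ltngtP j0 m') => // E; [slia | by rewrite E HP in H0].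
  have [j [H1 H2 H3 H4]] := IH (negbT HP) Hlt'.
  by exists j; split => //; slia.
Qed.

Lemma off_bset u j0 : u \notin Cs -> anc par u (v j0) -> j0 < m.-1 ->
  exists j, [/\ j0 <= j, j.+1 < m & u \in Bset par Cs v j].
Proof.
move=> Hu Ha Hj0.
have [j [H1 H2 H3 H4]] := @between (fun j => anc par u (v j)) j0 m.-1 Ha (off_not_last Hu) Hj0.
exists j; split => //; first slia.
by rewrite inE Hu H3 H4.
Qed.

Lemma bset_hi u i : u \notin Cs -> ~~ anc par u (v i.+1) -> i.+1 < m ->
  exists j, j <= i /\ u \in Bset par Cs v j.
Proof.
move=> Hu Ha Hi.
have H0 : anc par u (v 0) by rewrite Hv0; exact: anc_root.
have [j [H1 H2 H3 H4]] := @between (fun j => anc par u (v j)) 0 i.+1 H0 Ha (ltn0Sn _).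
exists j; split; first slia.
by rewrite inE Hu H3 H4.
Qed.

Lemma F1 i a : i < k -> m <= a -> a <= m + k - 1 - i -> a < n -> anc par (v a) (v i.+1).
Proof.
move=> Hik Hma Hak Han.
have Hk := k_le; have Hm := m_ge2; have Hmn := m_le_n.
case Hna0: (anc par (v a) (v i.+1)) => //.
have Hna : ~~ anc par (v a) (v i.+1) by rewrite Hna0.
have Hva : v a \notin Cs by rewrite in_chain //; slia.
have [j [Hj Bj]] := bset_hi Hva Hna ltac:(slia).
have Hsub : Delta par (v i.+1) :\: Cs \subset [set v (m + nat_of_ord b) | b : 'I_(a - m)].
  apply/subsetP => x; rewrite !inE => /andP [Hx Hax].
  have [b Hb Ex] := all_cover x; subst x.
  have Hmb : m <= b by move: Hx; rewrite in_chain //; slia.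
  have [j' [Hj'1 Hj'2 Bj']] := off_bset Hx Hax ltac:(slia).
  have Hba : b <= a.
    have H1 : m <= b < n by rewrite Hmb Hb.
    have H2 : m <= a < n by rewrite Hma Han.
    have Hjj : j < j' by slia.
    have Hj1 : j.+1 < m by slia.
    exact: (@Hlin b a j' j H1 H2 Hj'2 Hj1 Bj' Bj (introT orP (or_introl Hjj))).
  have Hba' : b != a by apply/eqP => E; rewrite -E Hax in Hna.
  have Hlt : b - m < a - m by slia.
  apply/imsetP; exists (Ordinal Hlt) => //=; congr v; slia.
have H4 := leq_trans (subset_leq_card Hsub) (leq_imset_card _ _).
rewrite card_ord in H4.
have := beta_k Hik; rewrite /beta; slia.
Qed.


Definition Dt (t : nat -> nat) : {ffun V -> {set V}} :=
  [ffun u => [set x | (x == u) || [exists i : 'I_k.+1, exists j : 'I_n,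
                 [&& v i == u, x == v j & i < j <= t i]]]].

Lemma k_lt_n i : i <= k -> i < n.
Proof. have := k_le; have := m_le_n; have := m_ge2; slia. Qed.

Lemma k_lt_m i : i <= k -> i.+1 < m.
Proof. have := k_le; have := m_ge2; slia. Qed.

Lemma memD t i a : i <= k -> a < n ->
  (v a \in Dt t (v i)) = (a == i) || (i < a <= t i).
Proof.
move=> Hi Ha; have Hin := k_lt_n Hi.
rewrite ffunE inE vinj //; congr orb; apply/existsP/idP.
- case=> i' /existsP [j /and3P [/eqP E1 /eqP E2 H]].
  have Ei : (i' : nat) = i by apply: Hinj => //; apply: k_lt_n; rewrite -ltnS.
  have Ej : a = j by apply: Hinj.
  by rewrite -Ei Ej.
- move=> H; have Hi' : i < k.+1 by [].
  exists (Ordinal Hi'); apply/existsP; exists (Ordinal Ha) => /=.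
  by rewrite !eqxx H.
Qed.

Lemma memD_other t u x : (forall i, i <= k -> v i != u) -> (x \in Dt t u) = (x == u).
Proof.
move=> Hu; rewrite ffunE inE; case: (x == u) => //=.
apply/negbTE/negP; case/existsP => i; case/existsP => j; case/and3P => /eqP E _ _.
have := Hu i; rewrite -ltnS ltn_ord E eqxx; by move=> /(_ isT).
Qed.

Lemma v_self_in t u : u \in Dt t u.
Proof. by rewrite ffunE inE eqxx. Qed.

Lemma notin_chain_bset j' w : w \notin Cs -> anc par w (v j') -> ~~ anc par w (v j'.+1) ->
  j'.+1 < m -> w \in Bset par Cs v j'.
Proof. by move=> *; rewrite inE; apply/and3P. Qed.

Lemma conn_v t i : i <= k -> t i <= m + k - 1 - i -> forall j, j < n -> v j \in Dt t (v i) ->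
  connect (tree_edge r par (Dt t (v i))) (v i) (v j).
Proof.
move=> Hi Hti; have Hk := k_le; have Hm := m_ge2; have Hmn := m_le_n.
elim/ltn_ind => j IH Hj Hvj.
have Hvj' := Hvj; rewrite memD // in Hvj'.
case/orP: Hvj' => [/eqP -> | /andP [Hij Hjt]]; first exact: connect0.
have Hedge : forall b, b < n -> b < j -> v b \in Dt t (v i) -> par (v j) = v b ->
    connect (tree_edge r par (Dt t (v i))) (v i) (v j).
  move=> b Hb Hbj Hvb Hp.
  apply: connect_trans (IH b Hbj Hb Hvb) (connect1 _).
  rewrite /tree_edge Hvb Hvj /= (covers_of Htree Hp) //.
  rewrite vinj //; slia.
case: (ltnP j m) => Hjm.
- have Hj1 : (j.-1).+1 = j by slia.
  apply: (Hedge j.-1); try slia.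
    rewrite memD; [|done|slia]; apply/orP.
    case: (eqVneq j.-1 i) => [->|Hne]; [by left | right; apply/andP; split; slia].
  by rewrite -{1}Hj1 HvP // Hj1.
- have Hik : i < k by slia.
  have Hanc := F1 Hik Hjm (leq_trans Hjt Hti) Hj.
  have Hvjc : v j \notin Cs by rewrite in_chain //; slia.
  have [j' [Hj'1 Hj'2 Bj']] := off_bset Hvjc Hanc ltac:(slia).
  move: (Bj'); rewrite inE => /and3P [_ Ha1 Ha2].
  have Hne : v j != v j' by rewrite vinj //; slia.
  case: (eqVneq (par (v j)) (v j')) => Hpj.
    apply: (Hedge j') => //; try slia.
    by rewrite memD //; [apply/orP; right; apply/andP; split; slia | slia].
  have Hw1 : anc par (par (v j)) (v j') by apply: (anc_step Htree).
  have Hw2 : ~~ anc par (par (v j)) (v j'.+1).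
    apply/negP => H; by rewrite (anc_trans Htree (anc_par Htree (v j)) H) in Ha2.
  have Hw3 : par (v j) \notin Cs.
    apply/negP => /chain_cover [c Hc Ec].
    case: (leqP c j') => Hcj.
    - have Hc1 : anc par (v c) (v j') by rewrite -Ec.
      have := anc_antisym Htree (chain_anc Hcj (ltnW Hj'2)) Hc1.
      by move=> E; rewrite Ec E eqxx in Hpj.
    - move/negP: Hw2; apply; rewrite Ec; apply: chain_anc => //.
  have Bw := notin_chain_bset Hw3 Hw1 Hw2 Hj'2.
  have [b Hb Eb] := all_cover (par (v j)).
  have Hmb : m <= b by move: Hw3; rewrite Eb in_chain //; slia.
  have Hbj : b <= j.
    rewrite Eb in Bw.
    have H1 : m <= b < n by rewrite Hmb Hb.
    have H2 : m <= j < n by rewrite Hjm Hj.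
    apply: (@Hlin b j j' j' H1 H2 Hj'2 Hj'2 Bw Bj').
    by rewrite eqxx -Eb (anc_par Htree) orbT.
  have Hbj' : b != j.
    apply/eqP => E; rewrite E in Eb.
    have Er := par_fix Htree Eb.
    have H0 : v 0 \in Cs by apply: HvC; slia.
    by rewrite Er -Hv0 H0 in Hvjc.
  have Hbj2 : b < j by rewrite ltn_neqAle Hbj' Hbj.
  apply: (Hedge b Hb Hbj2) => //.
  have Hib : i < b by slia.
  have Hbt : b <= t i by slia.
  by rewrite (memD t Hi Hb) Hib Hbt orbT.
Qed.


Definition lam (A B : {set V}) := [|| A \subset B, B \subset A | [disjoint A & B]].

Lemma lamC A B : lam A B = lam B A.
Proof. by rewrite /lam disjoint_sym orbA (orbC (A \subset B)) -orbA. Qed.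

Lemma lam_single (A B : {set V}) (u : V) : (forall x, x \in B -> x = u) -> lam A B.
Proof.
move=> HB; rewrite /lam; case Hu: (u \in A).
- by apply/orP; right; apply/orP; left; apply/subsetP => x /HB ->.
- apply/orP; right; apply/orP; right; rewrite disjoint_sym disjoint_subset.
  by apply/subsetP => x /HB ->; rewrite inE Hu.
Qed.

Section WithT.
Variable t : nat -> nat.
Hypothesis Ht1 : forall i, i <= k -> t i <= m + k - 1 - i.
Hypothesis Ht2 : forall i i', i < i' -> i' <= k -> t i' <= t i.

Lemma anc_D i x : i <= k -> x \in Dt t (v i) -> anc par x (v i).
Proof.
move=> Hi Hx; have Hk := k_le; have Hm := m_ge2; have Hmn := m_le_n.
have [a Ha Ex] := all_cover x; subst x.
move: Hx; rewrite memD // => /orP [/eqP -> | /andP [Hia Hat]]; first exact: (anc_refl Htree).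
case: (ltnP a m) => Ham; first by apply: chain_anc => //; slia.
have Hik : i < k by have := Ht1 Hi; slia.
apply: (anc_trans Htree (F1 Hik Ham _ Ha)); first by have := Ht1 Hi; slia.
by apply: chain_anc; slia.
Qed.

Lemma connS i : i <= k -> connectedS r par (Dt t (v i)).
Proof.
move=> Hi; apply/forallP => x; apply/implyP => Hx; apply/forallP => y; apply/implyP => Hy.
have [a Ha Ex] := all_cover x; have [b Hb Ey] := all_cover y; subst x y.
have Hs := sym_connect_sym (tree_edge_sym r par (Dt t (v i))).
apply: connect_trans (_ : connect _ _ (v i)) (conn_v Hi (Ht1 Hi) Hb Hy).
by rewrite Hs; exact: (conn_v Hi (Ht1 Hi) Ha Hx).
Qed.

Lemma lam_chain i i' : i <= i' -> i' <= k -> lam (Dt t (v i)) (Dt t (v i')).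
Proof.
move=> Hii' Hi'; have Hi : i <= k by slia.
have Hin := k_lt_n Hi; have Hin' := k_lt_n Hi'.
have Htt : t i' <= t i.
  case: (ltngtP i i') => [lt|gt|eq]; [exact: Ht2 | slia | by rewrite eq].
case: (boolP ((i' == i) || (i' <= t i))) => H.
- apply/orP; right; apply/orP; left; apply/subsetP => x Hx.
  have [a Ha Ex] := all_cover x; subst x.
  move: Hx; rewrite !memD // => /orP [/eqP E| /andP [H1 H2]].
  + subst a; move: H Hii'; clear; slia.
  + by apply/orP; right; apply/andP; split; slia.
- apply/orP; right; apply/orP; right; rewrite disjoint_subset.
  apply/subsetP => x Hx; have [a Ha Ex] := all_cover x; subst x.
  rewrite inE; apply/negP => Hx'.
  move: Hx Hx'; rewrite !memD //.
  move: H; rewrite negb_or => /andP [H3 H4].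
  case/orP => [/eqP E1 | /andP [H1 H2]]; case/orP => [/eqP E3 | /andP [H5 H6]]; slia.
Qed.

Lemma orn_Dt : ornamentation r par (Dt t).
Proof.
have chain_or_not : forall w, (exists2 i, i <= k & w = v i) \/ (forall i, i <= k -> v i != w).
  move=> w; case: (boolP [exists i : 'I_k.+1, v i == w]) => [/existsP [i /eqP E]|H].
  - by left; exists i; [rewrite -ltnS | by []].
  - right => i Hi; apply/negP => /eqP E; move/existsP: H; apply.
    have Hi' : i < k.+1 by [].
    by exists (Ordinal Hi'); rewrite E.
apply/andP; split.
- apply/forallP => w; case: (chain_or_not w) => [[i Hi ->]|Hw].
  + apply/and3P; split; last first.
    * by apply/forallP => x; apply/implyP; exact: anc_D.
    * exact: v_self_in.
    * rewrite /ornament connS // andbT; apply/set0Pn; exists (v i); exact: v_self_in.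
  + apply/and3P; split; last first.
    * apply/forallP => x; apply/implyP; rewrite memD_other // => /eqP ->.
      exact: (anc_refl Htree).
    * exact: v_self_in.
    * rewrite /ornament; apply/andP; split; first by apply/set0Pn; exists w; exact: v_self_in.
      apply/forallP => x; apply/implyP; rewrite memD_other // => /eqP ->.
      apply/forallP => y; apply/implyP; rewrite memD_other // => /eqP ->.
      exact: connect0.
- apply/forallP => w; apply/forallP => w'.
  change (lam (Dt t w) (Dt t w')).
  case: (chain_or_not w') => [[i' Hi' ->]|Hw'].
  + case: (chain_or_not w) => [[i Hi ->]|Hw].
    * case: (leqP i i') => H; first exact: lam_chain.
      by rewrite lamC; apply: lam_chain => //; slia.
    * by rewrite lamC; apply: (@lam_single _ _ w) => x; rewrite memD_other // => /eqP.
  + by apply: (@lam_single _ _ w') => x; rewrite memD_other // => /eqP.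
Qed.

End WithT.


Lemma Dt_mono t t' w : (forall i, i <= k -> t i <= t' i) -> Dt t w \subset Dt t' w.
Proof.
move=> Ht; rewrite !ffunE; apply/subsetP => x; rewrite !inE.
case/orP => [->//|/existsP [i /existsP [j /and3P [H1 H2 /andP [H3 H4]]]]].
apply/orP; right; apply/existsP; exists i; apply/existsP; exists j.
rewrite H1 H2 H3 /=; apply: leq_trans H4 (Ht i _); by rewrite -ltnS.
Qed.

Lemma memD' t w x : (x \in Dt t w) = (x == w) || [exists i : 'I_k.+1, exists j : 'I_n,
                 [&& v i == w, x == v j & i < j <= t i]].
Proof. by rewrite ffunE inE. Qed.

Lemma orn_self d w : ornamentation r par d -> w \in d w.
Proof. by case/andP => /forallP /(_ w) /and3P []. Qed.

Lemma orn_anc d w x : ornamentation r par d -> x \in d w -> anc par x w.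
Proof. by case/andP => /forallP /(_ w) /and3P [_ _ /forallP /(_ x) /implyP]. Qed.

Lemma orn_conn d w x y : ornamentation r par d -> x \in d w -> y \in d w ->
  connect (tree_edge r par (d w)) x y.
Proof.
case/andP => /forallP /(_ w) /and3P [/andP [_ /forallP H] _ _] _ Hx Hy.
by move: (H x); rewrite Hx /= => /forallP /(_ y); rewrite Hy.
Qed.

Lemma orn_lam d w w' : ornamentation r par d -> lam (d w) (d w').
Proof. by case/andP => _ /forallP /(_ w) /forallP /(_ w'). Qed.

Definition tp p i := m + k - 1 - i - p.
Definition tq p i0 i := if i == i0 then tp p i - 1 else tp p i.

Lemma tp1 p : forall i, i <= k -> tp p i <= m + k - 1 - i.
Proof. by move=> i _; rewrite /tp leq_subr. Qed.
Lemma tp2 p : forall i i', i < i' -> i' <= k -> tp p i' <= tp p i.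
Proof. move=> i i' H _; rewrite /tp; slia. Qed.
Lemma tq1 p i0 : forall i, i <= k -> tq p i0 i <= m + k - 1 - i.
Proof. move=> i _; rewrite /tq /tp; case: (_ == _); slia. Qed.
Lemma tq2 p i0 : forall i i', i < i' -> i' <= k -> tq p i0 i' <= tq p i0 i.
Proof.
move=> i i' H _; rewrite /tq /tp.
case: (eqVneq i i0) => E1; case: (eqVneq i' i0) => E2; slia.
Qed.

Lemma orn_tp p : ornamentation r par (Dt (tp p)).
Proof. exact: orn_Dt (tp1 p) (tp2 p). Qed.
Lemma orn_tq p i0 : ornamentation r par (Dt (tq p i0)).
Proof. exact: orn_Dt (tq1 p i0) (tq2 p i0). Qed.


Lemma n_bound : m + k - 1 < n.
Proof. have := k_le_nm; have := m_ge2; have := m_le_n; slia. Qed.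

Section Key.
Variables (p : nat) (d : {ffun V -> {set V}}).
Hypothesis Hd : ornamentation r par d.
Hypothesis Hact : forall i, i <= k -> i < tp p i -> v (tp p i) \in d (v i).

Lemma through i z : i <= k -> i < tp p i -> anc par (v (tp p i)) z -> ~~ anc par (v i) z ->
  z \in d (v i).
Proof.
move=> Hi Ha H1 H2; apply/negPn/negP => Hz.
have Hc := orn_conn Hd (Hact Hi Ha) (orn_self (v i) Hd).
by have := connect_Delta Htree Hz Hc; rewrite H1 (negbTE H2).
Qed.

Lemma key_step i : i <= k -> (i < k -> Dt (tp p) (v i.+1) \subset d (v i.+1)) ->
  Dt (tp p) (v i) \subset d (v i).
Proof.
move=> Hi IH; have Hk := k_le; have Hm := m_ge2; have Hmn := m_le_n; have Hnb := n_bound.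
apply/subsetP => x Hx; have [a Ha Ex] := all_cover x; subst x.
move: Hx; rewrite memD // => /orP [/eqP -> | /andP [Hia Hat]]; first exact: orn_self.
have Hit : i < tp p i by slia.
have Hti := Hact Hi Hit.
case: (ltnP (tp p i) m) => Htm.
- apply: through => //.
  + by apply: chain_anc; slia.
  + by rewrite chain_anc_iff; slia.
- have Hik : i < k by move: Htm; rewrite /tp; slia.
  have Hi1 : v i.+1 \in d (v i).
    apply: through => //.
    + apply: F1 => //; rewrite /tp; slia.
    + by rewrite chain_anc_iff; slia.
  have Hsub : d (v i.+1) \subset d (v i).
    case/or3P: (orn_lam (v i) (v i.+1) Hd) => // H.
    + have := orn_anc Hd (subsetP H _ (orn_self (v i) Hd)).
      by rewrite chain_anc_iff; slia.
    + by have := disjointFr H Hi1; rewrite orn_self.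
  case: (eqVneq a (tp p i)) => [->//|Hne1].
  case: (eqVneq a i.+1) => [->//|Hne2].
  apply: (subsetP Hsub); apply: (subsetP (IH Hik)).
  rewrite memD //; apply/orP; right; rewrite /tp in Hat Hne1 *; slia.
Qed.

Lemma key_sub s i : k - i = s -> i <= k -> Dt (tp p) (v i) \subset d (v i).
Proof.
elim: s i => [|s IH] i Hs Hi; apply: key_step => // Hik.
- slia.
- apply: IH; slia.
Qed.

End Key.


Lemma cov_other p i0 w : w != v i0 -> Dt (tq p i0) w = Dt (tp p) w.
Proof.
move=> Hw; apply/setP => x; rewrite !memD'; congr orb.
apply: eq_existsb => i; apply: eq_existsb => j.
case E: (v i == w) => //=; rewrite /tq.
have -> : ((i : nat) == i0) = false.
  apply/negbTE/eqP => Ei; by rewrite -Ei (eqP E) eqxx in Hw.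
by [].
Qed.

Lemma sub_cov p i0 (S : {set V}) : i0 <= k -> S \subset Dt (tp p) (v i0) ->
  v (tp p i0) \notin S -> S \subset Dt (tq p i0) (v i0).
Proof.
move=> Hi0 HS Hn0; apply/subsetP => x Hx; have [a Ha Ex] := all_cover x; subst x.
have := subsetP HS _ Hx; rewrite !memD // /tq eqxx.
case/orP => [->//|/andP [H1 H2]]; apply/orP; right.
case: (eqVneq a (tp p i0)) => [E|Hne]; first by rewrite -E Hx in Hn0.
slia.
Qed.

Lemma ffun_ext_sub (d1 d2 : {ffun V -> {set V}}) :
  (forall w, d1 w \subset d2 w) -> (forall w, d2 w \subset d1 w) -> d1 = d2.
Proof.
move=> H1 H2; apply/ffunP => w; apply/eqP; by rewrite eqEsubset H1 H2.
Qed.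

Lemma le_orn (d1 d2 : {ffun V -> {set V}}) : orn_le d1 d2 -> forall w, d1 w \subset d2 w.
Proof. by move/forallP. Qed.

Lemma cov_is_cover p i0 : i0 <= k -> i0 < tp p i0 ->
  orn_covby r par (Dt (tq p i0)) (Dt (tp p)).
Proof.
move=> Hi0 Hact; have Hnb := n_bound.
have Htpn : tp p i0 < n by rewrite /tp; slia.
have Hmono : forall w, Dt (tq p i0) w \subset Dt (tp p) w.
  move=> w; apply: Dt_mono => i _; rewrite /tq; case: (_ == _); slia.
have Hnotin : v (tp p i0) \notin Dt (tq p i0) (v i0).
  rewrite memD // /tq eqxx negb_or; apply/andP; split; slia.
have Hin : v (tp p i0) \in Dt (tp p) (v i0).
  rewrite memD //; apply/orP; right; slia.
apply/and4P; split; [exact: orn_tq | exact: orn_tp | | ].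
- apply/andP; split; first by apply/forallP.
  apply/negP => /eqP E; by rewrite E Hin in Hnotin.
- apply/negP => /existsP [e /and3P [He /andP [Hle1 Hne1] /andP [Hle2 Hne2]]].
  have Hoth : forall w, w != v i0 -> e w = Dt (tp p) w.
    move=> w Hw; apply/eqP; rewrite eqEsubset (le_orn Hle2) /=.
    by rewrite -(cov_other p Hw) (le_orn Hle1).
  case Hc: (v (tp p i0) \in e (v i0)).
  + move/negP: Hne2; apply; apply/eqP; apply: ffun_ext_sub; first exact: le_orn.
    move=> w; case: (eqVneq w (v i0)) => [->|Hw]; last by rewrite Hoth.
    apply/subsetP => x Hx; have [a Ha Ex] := all_cover x; subst x.
    case: (eqVneq a (tp p i0)) => [->//|Hne].
    apply: (subsetP (le_orn Hle1 (v i0))).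
    move: Hx; rewrite !memD // /tq eqxx => /orP [->//|/andP [H1 H2]].
    apply/orP; right; slia.
  + move/negP: Hne1; apply; apply/eqP; apply: ffun_ext_sub; first exact: le_orn.
    move=> w; case: (eqVneq w (v i0)) => [->|Hw]; last by rewrite (Hoth w Hw) (cov_other p Hw).
    by apply: sub_cov => //; [exact: le_orn | rewrite Hc].
Qed.


Lemma chain_or_not w : (exists2 i, i <= k & w = v i) \/ (forall i, i <= k -> v i != w).
Proof.
case: (boolP [exists i : 'I_k.+1, v i == w]) => [/existsP [i /eqP E]|H].
- by left; exists i; [rewrite -ltnS | by []].
- right => i Hi; apply/negP => /eqP E; move/existsP: H; apply.
  have Hi' : i < k.+1 by [].
  by exists (Ordinal Hi'); rewrite E.
Qed.

Lemma tp_succ p i : tp p.+1 i = tp p i - 1.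
Proof. rewrite /tp; slia. Qed.

Lemma cover_ge p d' : orn_covby r par d' (Dt (tp p)) -> forall w, Dt (tp p.+1) w \subset d' w.
Proof.
case/and4P => Hd' _ /andP [Hle Hne] Hno.
case: (boolP [exists i0 : 'I_k.+1, (i0 < tp p i0) && (v (tp p i0) \notin d' (v i0))]).
- case/existsP => i0 /andP [Ha Hnot].
  have Hi0 : (i0 : nat) <= k by rewrite -ltnS.
  have Hle' : orn_le d' (Dt (tq p i0)).
    apply/forallP => w; case: (eqVneq w (v i0)) => [->|Hw].
    + by apply: sub_cov => //; exact: le_orn.
    + rewrite (cov_other p Hw); exact: le_orn.
  have Heq : d' = Dt (tq p i0).
    apply/eqP; apply/negPn/negP => H; move/negP: Hno; apply; apply/existsP.
    exists (Dt (tq p i0)); case/and4P: (cov_is_cover Hi0 Ha) => _ _ Hlt _.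
    by rewrite orn_tq Hlt andbT /orn_lt Hle' H.
  move=> w; rewrite Heq; apply: Dt_mono => i _; rewrite tp_succ /tq; case: (_ == _); slia.
- move=> Hall w.
  have Hact : forall i, i <= k -> i < tp p i -> v (tp p i) \in d' (v i).
    move=> i Hi Ha; apply/negPn/negP => Hnn; move/existsP: Hall; apply.
    have Hi' : i < k.+1 by [].
    by exists (Ordinal Hi'); rewrite /= Ha Hnn.
  apply: subset_trans (Dt_mono _ (_ : forall i, i <= k -> tp p.+1 i <= tp p i)) _.
    by move=> i _; rewrite tp_succ leq_subr.
  case: (chain_or_not w) => [[i Hi ->]|Hw].
  + exact: (@key_sub p d' Hd' Hact (k - i) i erefl Hi).
  + by apply/subsetP => x; rewrite memD_other // => /eqP ->; exact: orn_self.
Qed.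

Lemma Pop_step p : Pop r par (Dt (tp p)) = Dt (tp p.+1).
Proof.
apply/ffunP => w; rewrite ffunE; apply/setP => x; rewrite inE.
apply/andP/idP.
- case=> Hx /bigcapP Hcap; rewrite memD' in Hx; rewrite memD'.
  case/orP: Hx => [->//|/existsP [i /existsP [j /and3P [/eqP E1 /eqP E2 H]]]].
  have Hi : (i : nat) <= k by rewrite -ltnS.
  have Hact : i < tp p i by case/andP: H => H1 H2; slia.
  have := Hcap _ (cov_is_cover Hi Hact); rewrite -E1 E2 memD // /tq eqxx => H'.
  apply/orP; right; apply/existsP; exists i; apply/existsP; exists j.
  rewrite !eqxx /= tp_succ; move: H H' => /andP [H1 H2]; case/orP => [/eqP E|//]; by rewrite E ltnn in H1.
- move=> Hx; split.
  + apply: (subsetP (Dt_mono _ _)) Hx => i _; by rewrite tp_succ leq_subr.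
  + by apply/bigcapP => d' Hc; exact: (subsetP (cover_ge Hc w)).
Qed.

Lemma iter_Pop p : iter p (Pop r par) (Dt (tp 0)) = Dt (tp p).
Proof. elim: p => [//|p IH]; by rewrite iterS IH Pop_step. Qed.


Definition dagger : {ffun V -> {set V}} :=
    [ffun u => if [exists i : 'I_k.+1, v i == u]
               then [set x | [exists i : 'I_k.+1, exists j : 'I_#|V|,
                        [&& v i == u, x == v j & i <= j <= m + k - 1 - i]]]
               else [set u]].

Lemma dagger_eq : dagger = Dt (tp 0).
Proof.
have Hk := k_le; have Hm := m_ge2.
apply/ffunP => u; rewrite ffunE; case: ifP => [/existsP [i /eqP E]|H].
- subst u; have Hi : (i : nat) <= k by rewrite -ltnS.
  apply/setP => x; have [a Ha ->] := all_cover x; rewrite memD // inE.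
  apply/idP/idP.
  + case/existsP=> i' /existsP [j /and4P [/eqP E1 /eqP E2 H3 H4]].
    have Hi' : (i' : nat) <= k by rewrite -ltnS.
    have Ei : (i' : nat) = i by apply: Hinj => //; apply: k_lt_n.
    have Ej : a = j by apply: Hinj.
    rewrite -Ei Ej /tp; move: H3 H4; clear; slia.
  + move=> H; apply/existsP; exists i; apply/existsP; exists (Ordinal Ha); rewrite !eqxx /=.
    move: H; rewrite /tp; slia.
- apply/setP => x; rewrite memD_other ?inE // => i Hi; apply/negP => /eqP E.
  have Hi' : i < k.+1 by [].
  by move/negbT/negP: H; apply; apply/existsP; exists (Ordinal Hi'); rewrite /= E.
Qed.

Lemma main_sec i p : i <= k ->
  iter p (Pop r par) dagger (v i) =
      v i |: [set x | [exists j : 'I_#|V|,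
                 (x == v j) && (i.+1 <= j <= m + k - 1 - i - p)]].
Proof.
move=> Hi; rewrite dagger_eq iter_Pop; apply/setP => x.
have [a Ha ->] := all_cover x; rewrite memD // !inE vinj //; last exact: k_lt_n.
congr orb; apply/idP/existsP.
- move=> H; exists (Ordinal Ha); rewrite eqxx /=; move: H; rewrite /tp; slia.
- case=> j /andP [/eqP E H]; have Ej : a = j by apply: Hinj.
  rewrite Ej /tp; move: H; clear; slia.
Qed.

End Main.

Theorem lemma3p2 (V : finType) (r : V) (par : V -> V)
  (Htree : rooted_tree r par) (Hn : 2 <= #|V|)
  (Cs : {set V}) (HCs : maxchain r par Cs)
  (Hmax : forall C, maxchain r par C ->
     #|C| + fC r par C r <= #|Cs| + fC r par Cs r)
  (v : nat -> V)
  (Hinj : forall a b, a < #|V| -> b < #|V| -> v a = v b -> a = b)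
  (Hv0 : v 0 = r)
  (HvC : forall i, i < #|Cs| -> v i \in Cs)
  (HvP : forall i, i.+1 < #|Cs| -> par (v i.+1) = v i)
  (Hlin : forall a b i j,
     #|Cs| <= a < #|V| -> #|Cs| <= b < #|V| ->
     i.+1 < #|Cs| -> j.+1 < #|Cs| ->
     v a \in Bset par Cs v i -> v b \in Bset par Cs v j ->
     (j < i) || ((i == j) && anc par (v b) (v a)) ->
     a <= b) :
  let m := #|Cs| in
  let k := fC r par Cs r in
  let dagger : {ffun V -> {set V}} :=
    [ffun u => if [exists i : 'I_k.+1, v i == u]
               then [set x | [exists i : 'I_k.+1, exists j : 'I_#|V|,
                        [&& v i == u, x == v j & i <= j <= m + k - 1 - i]]]
               else [set u]] in
  forall i p : nat, i <= k ->
    iter p (Pop r par) dagger (v i) =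
      v i |: [set x | [exists j : 'I_#|V|,
                 (x == v j) && (i.+1 <= j <= m + k - 1 - i - p)]].
Proof.
move=> m k dagger i p Hi.
exact: (main_sec Htree Hn HCs Hinj Hv0 HvC HvP Hlin p Hi).
Qed.
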